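(* Let $G$ be an $n$-vertex graph and $k$ a positive integer such that for every two disjoint subsets $S,T\subseteq V(G)$ with $|S|=|T|=k$ there is an edge of $G$ between $S$ and $T$. Let $\mathcal{M}$ be a collection of pairwise disjoint pairs $\{x,y\}\subseteq V(G)$ (where $x=y$ is allowed). Then $G\cup\mathcal{M}$ contains an $\mathcal{M}$-alternating path which uses all but at most $2k-1$ of the pairs in $\mathcal{M}$.
   Context: $G\cup\mathcal{M}$ denotes the graph obtained from $G$ by adding the edge $xy$ for every pair $\{x,y\}\in\mathcal{M}$ with $x\ne y$. A path in $G\cup\mathcal{M}$ is $\mathcal{M}$-alternating if it is of the form $e_1f_1e_2f_2\dots e_lf_l$, where the $e_i$ are edges of $G$ and each $f_i$ is either an edge $xy$ with $\{x,y\}\in\mathcal{M}$, $x\ne y$, or a single vertex $x$ with $\{x,x\}\in\mathcal{M}$. A pair is used by the path if it appears as one of the $f_i$. *)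

(* Defs.v *)
From mathcomp Require Import all_boot.
Set Implicit Arguments. Unset Strict Implicit. Unset Printing Implicit Defensive.

(* A graph G on vertex set V : finType is a symmetric irreflexive relation e.
   A collection M of pairs is a {set {set V}}; the pair {x,y} is [set x; y],
   which is the singleton [set x] when x = y. *)

Definition pair_set (V : finType) (p : V * V) : {set V} := [set p.1; p.2].

(* Vertices visited by the segments f_1 ... f_l, where f_i is the pair
   (a_i, b_i): the M-edge a_i b_i if a_i != b_i, the single vertex a_i
   if a_i = b_i. *)
Definition seg_vertices (V : finType) (s : seq (V * V)) : seq V :=
  flatten [seq if p.1 == p.2 then [:: p.1] else [:: p.1; p.2] | p <- s].

(* The vertex sequence v0, a_1, (b_1), a_2, (b_2), ..., a_l, (b_l) is an
   M-alternating path e_1 f_1 ... e_l f_l in G \cup M with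
   e_1 = v0 a_1 and e_{i+1} = b_i a_{i+1} edges of G, and f_i = {a_i,b_i} in M,
   all vertices distinct. *)
Definition alt_path_from (V : finType) (e : rel V) (M : {set {set V}})
    (v0 : V) (s : seq (V * V)) : Prop :=
  [/\ all (fun p => pair_set p \in M) s,
      path (fun p q => e p.2 q.1) (v0, v0) s
    & uniq (v0 :: seg_vertices s)].

Definition alt_path (V : finType) (e : rel V) (M : {set {set V}})
    (s : seq (V * V)) : Prop :=
  s = [::] \/ exists v0 : V, alt_path_from e M v0 s.

Definition used_pairs (V : finType) (s : seq (V * V)) : {set {set V}} :=
  [set pair_set p | p in s].

(* Main.v *)
Require Import Defs.
From mathcomp Require Import all_boot zify.
Set Implicit Arguments. Unset Strict Implicit. Unset Printing Implicit Defensive.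

Lemma sub_k (T : finType) (A : {set T}) k : k <= #|A| -> exists2 B : {set T}, B \subset A & #|B| = k.
Proof.
move=> hk; exists [set x in take k (enum A)].
  apply/subsetP => x; rewrite inE => /mem_take; by rewrite mem_enum.
rewrite cardsE (card_uniqP _) ?take_uniq ?enum_uniq // size_take -cardE.
case: ltnP => //; lia.
Qed.

Definition seg (V : finType) (p : V * V) : seq V :=
  if p.1 == p.2 then [:: p.1] else [:: p.1; p.2].

Lemma seg_cons (V : finType) (p : V * V) Q :
  seg_vertices (p :: Q) = seg p ++ seg_vertices Q.
Proof. by []. Qed.

Lemma mem_seg (V : finType) (p : V * V) v : (v \in seg p) = (v \in pair_set p).
Proof.
rewrite /seg /pair_set !inE; case: eqP => [->|_]; by rewrite ?inE ?orbb.
Qed.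

Lemma uniq_seg (V : finType) (p : V * V) : uniq (seg p).
Proof. rewrite /seg; case: eqP => //= /eqP; by rewrite inE andbT. Qed.

Lemma mem_sv (V : finType) v (Q : seq (V * V)) :
  (v \in seg_vertices Q) = has (fun q => v \in pair_set q) Q.
Proof. elim: Q => //= q Q IH; by rewrite -/(seg q) mem_cat IH mem_seg. Qed.

Lemma mem_used (V : finType) f (Q : seq (V * V)) :
  (f \in used_pairs Q) = has (fun q => pair_set q == f) Q.
Proof.
apply/imsetP/hasP => [[q qQ ->]|[q qQ /eqP <-]]; by exists q.
Qed.

Definition swap (V : finType) (p : V * V) := (p.2, p.1).

Lemma pair_swap (V : finType) (p : V * V) : pair_set (swap p) = pair_set p.
Proof. by rewrite /pair_set /= setUC. Qed.

Lemma perm_seg_swap (V : finType) (p : V * V) : perm_eq (seg (swap p)) (seg p).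
Proof.
rewrite /seg /=; case: eqP => [->|ne]; case: eqP => //.
  by move=> h; case: ne; rewrite h.
move=> _; by rewrite perm_sym (perm_catC [:: p.1] [:: p.2]).
Qed.

Lemma perm_sv_swap (V : finType) (Q : seq (V * V)) :
  perm_eq (seg_vertices (map (@swap V) Q)) (seg_vertices Q).
Proof.
elim: Q => //= q Q IH; rewrite -/(seg q) -/(seg (swap q)).
exact: perm_cat (perm_seg_swap q) IH.
Qed.

Lemma path_swap (V : finType) (e : rel V) : symmetric e -> forall (T : seq (V * V)) x,
  path (fun q p => e p.2 q.1) x T -> path (fun p q => e p.2 q.1) (swap x) (map (@swap V) T).
Proof.
move=> se; elim => //= y T IH x /andP [h1 h2]; rewrite IH // andbT se //.
Qed.


Definition Inv (V : finType) (e : rel V) (M S U : {set {set V}}) (Q : seq (V * V)) : Prop :=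
  [/\ (forall f, (f \in M) = [|| f \in S, f \in U | f \in used_pairs Q]),
      (forall f, f \in S -> (f \notin U) && (f \notin used_pairs Q)),
      (forall f, f \in U -> f \notin used_pairs Q) &
      [/\ sorted (fun q p => e p.2 q.1) Q,
      uniq (seg_vertices Q) &
      (forall u, u \in U -> exists2 b, b \in u & forall s y, s \in S -> y \in s -> ~~ e b y)]].

Definition Mdisj (V : finType) (M : {set {set V}}) :=
  forall f g, f \in M -> g \in M -> f != g -> [disjoint f & g].

Lemma disjF (V : finType) (M : {set {set V}}) f g v : Mdisj M -> f \in M -> g \in M ->
  v \in f -> v \in g -> f = g.
Proof.
move=> D fM gM vf vg; case: (eqVneq f g) => // ne.
by move: (D _ _ fM gM ne) => /pred0P /(_ v) /=; rewrite vf vg.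
Qed.

Lemma push (V : finType) (e : rel V) (M S U : {set {set V}}) Q s a a' :
  Mdisj M -> Inv e M S U Q -> s \in S -> pair_set (a, a') = s ->
  (forall q Q', Q = q :: Q' -> e q.2 a) -> Inv e M (S :\ s) U ((a, a') :: Q).
Proof.
move=> D [I1 I2 I3 [I4 I5 I6]] sS ps hQ.
have sM : s \in M by rewrite I1 sS.
have /andP [sU sQ] := I2 _ sS.
split; [ | | | split].
- move=> f; rewrite I1 !mem_used /= !inE ps.
  case: (eqVneq f s) => [->|fs]; first by rewrite sS !orbT.
  by [].
- move=> f; rewrite !inE => /andP [fs fS]; rewrite mem_used /= ps (eq_sym s) (negbTE fs) /=.
  by rewrite -mem_used; exact: I2.
- move=> f fU; rewrite mem_used /= ps negb_or -mem_used I3 // andbT.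
  by apply/eqP => E; move: sU; rewrite E fU.
- case: Q I4 hQ {I1 I2 I3 I5 I6 sQ} => // q Q' I4 hQ /=; rewrite (hQ q Q') //.
- rewrite seg_cons cat_uniq uniq_seg I5 andbT /=.
  apply/hasP => -[v vQ]; rewrite mem_seg ps => vs.
  move: vQ; rewrite mem_sv => /hasP [q qQ vq].
  have qM : pair_set q \in M by rewrite I1 mem_used; apply/orP; right; apply/orP; right; apply/hasP; exists q.
  have E := disjF D sM qM vs vq.
  by move: sQ; rewrite mem_used; apply/negP/negPn/hasP; exists q; rewrite // E.
- move=> u uU; have [b bu hb] := I6 u uU; exists b => // s0 y; rewrite inE => /andP [_ h]; exact: hb.
Qed.

Lemma pop (V : finType) (e : rel V) (M S U : {set {set V}}) Q a b :
  Inv e M S U ((a, b) :: Q) -> (forall s y, s \in S -> y \in s -> ~~ e b y) ->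
  Inv e M S (pair_set (a, b) |: U) Q.
Proof.
move=> [I1 I2 I3 [I4 I5 I6]] hb.
have pQ : pair_set (a, b) \notin used_pairs Q.
  move: I5; rewrite seg_cons cat_uniq => /and3P [_ H _].
  rewrite mem_used; apply/hasP => -[q qQ /eqP E]; move/hasP: H; apply; exists a.
    by rewrite mem_sv; apply/hasP; exists q; rewrite // E /pair_set !inE eqxx.
  by rewrite mem_seg /pair_set !inE eqxx.
have sub f : f \in used_pairs Q -> f \in used_pairs ((a, b) :: Q).
  by rewrite !mem_used /= => ->; rewrite orbT.
split; [ | | | split].
- move=> f; rewrite I1 !mem_used /= !inE (eq_sym _ f).
  by case: (f \in S); case: (f == _); case: (f \in U).
- move=> f fS; have /andP [fU fQ] := I2 _ fS; rewrite !inE (negbTE fU) orbF.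
  apply/andP; split.
    by apply/eqP => E; move: fQ; rewrite E mem_used /= eqxx.
  by apply/negP => /sub; apply/negP.
- move=> f; rewrite !inE => /orP [/eqP ->|fU] //.
  by apply/negP => /sub; apply/negP; exact: I3.
- exact: path_sorted I4.
- by move: I5; rewrite seg_cons cat_uniq => /and3P [].
- move=> u; rewrite !inE => /orP [/eqP ->|uU]; last exact: I6.
  by exists b => //; rewrite /pair_set !inE eqxx orbT.
Qed.


Lemma dfs_main (V : finType) (e : rel V) (M : {set {set V}}) :
  Mdisj M -> (forall f, f \in M -> exists x y : V, f = [set x; y]) ->
  forall d S U Q, Inv e M S U Q -> #|U| + d = #|S| ->
  exists S' U' Q', Inv e M S' U' Q' /\ #|S'| = #|U'|.
Proof.
move=> D HP; elim => [|d IH] S U Q I Hc.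
  by exists S, U, Q; rewrite addn0 in Hc.
have [s0 s0S] : exists s0, s0 \in S.
  by apply/card_gt0P; lia.
have cardD s : s \in S -> #|U| + d = #|S :\ s|.
  by move=> sS; move: (cardsD1 s S); rewrite sS; lia.
have inM s : s \in S -> s \in M by case: I => I1 _ _ _ s1; rewrite I1 s1.
case: Q I => [|[a b] Q] I.
  have [x [y E]] := HP _ (inM _ s0S).
  have I' := push D I s0S (esym E) (fun q Q' (h : [::] = q :: Q') => ltac:(discriminate)).
  exact: IH _ _ _ I' (cardD _ s0S).
case: (boolP [exists s in S, exists y in s, e b y]).
  case/exists_inP => s sS /exists_inP [y ys eby].
  have [x1 [x2 E]] := HP _ (inM _ sS).
  have [a' pE] : exists a', pair_set (y, a') = s.
    move: ys; rewrite E !inE => /orP [] /eqP ->.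
      by exists x2.
    by exists x1; rewrite /pair_set /= setUC.
  have I' := push D I sS pE (fun q Q' (h : (a, b) :: Q = q :: Q') => ltac:(case: h => <- _; exact: eby)).
  exact: IH _ _ _ I' (cardD _ sS).
move=> nex.
have hb : forall s y, s \in S -> y \in s -> ~~ e b y.
  move=> s y sS ys; apply/negP => eby; move/negP: nex; apply.
  by apply/exists_inP; exists s => //; apply/exists_inP; exists y.
have I' := pop I hb.
have pU : pair_set (a, b) \notin U.
  case: I => _ _ I3 _; apply/negP => pU; move: (I3 _ pU).
  by rewrite mem_used /= eqxx.
apply: IH _ _ _ I' _; rewrite cardsU1 pU; lia.
Qed.


Theorem lemma3p17 (n : nat) (V : finType) (e : rel V) (k : nat) (M : {set {set V}}) :
  #|V| = n ->
  symmetric e -> irreflexive e ->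
  0 < k ->
  (forall S T : {set V}, [disjoint S & T] -> #|S| = k -> #|T| = k ->
     exists x, exists y, [/\ x \in S, y \in T & e x y]) ->
  (forall f, f \in M -> exists x y : V, f = [set x; y]) ->
  (forall f g, f \in M -> g \in M -> f != g -> [disjoint f & g]) ->
  exists s : seq (V * V),
    alt_path e M s /\ #|M :\: used_pairs s| <= 2 * k - 1.
Proof.
move=> _ se _ k0 Hedge HP D.
have I0 : Inv e M M set0 [::].
  split; [ | | | split] => //.
  - by move=> f; rewrite mem_used inE /= !orbF.
  - by move=> f _; rewrite mem_used inE.
  - by move=> f; rewrite inE.
  - by move=> f; rewrite inE.
have Hc0 : #|(set0 : {set {set V}})| + #|M| = #|M| by rewrite cards0.
have [S [U [Q [I Hc]]]] := dfs_main D HP I0 Hc0.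
have lt : #|S| < k.
  rewrite ltnNge; apply/negP => kS.
  case: I => I1 I2 I3 [I4 I5 I6].
  have [s0 s0S] : exists s0, s0 \in S by apply/card_gt0P; lia.
  have inM s : s \in S -> s \in M by move=> sS; rewrite I1 sS.
  have inMU u : u \in U -> u \in M by move=> uU; rewrite I1 uU orbT.
  have [x0 [y0 _]] := HP _ (inM _ s0S).
  pose P b := [forall s in S, forall y in s, ~~ e b y].
  pose g (u : {set V}) := odflt x0 [pick b in u | P b].
  have gP u : u \in U -> (g u \in u) && P (g u).
    move=> uU; rewrite /g; case: pickP => [b /= -> //|none].
    have [b bu hb] := I6 u uU; move: (none b); rewrite /= bu /=.
    move/negbT/negP => -[]; rewrite /P; apply/forall_inP => s sS; apply/forallP => y; apply/implyP => ys.
    exact: hb s y sS ys.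
  pose h (s : {set V}) := odflt x0 [pick y in s].
  have hP s : s \in S -> h s \in s.
    move=> sS; rewrite /h; case: pickP => [y //|none].
    have [x [y E]] := HP _ (inM _ sS); move: (none x); by rewrite E !inE eqxx.
  have cg : #|g @: U| = #|U|.
    apply: card_in_imset => u1 u2 u1U u2U E.
    have /andP [g1 _] := gP _ u1U; have /andP [g2 _] := gP _ u2U.
    rewrite -E in g2; exact: disjF D (inMU _ u1U) (inMU _ u2U) g1 g2.
  have ch : #|h @: S| = #|S|.
    apply: card_in_imset => u1 u2 u1U u2U E.
    have g1 := hP _ u1U; have g2 := hP _ u2U.
    rewrite -E in g2; exact: disjF D (inM _ u1U) (inM _ u2U) g1 g2.
  have [X XS cX] := @sub_k _ (g @: U) k ltac:(lia).
  have [Y YS cY] := @sub_k _ (h @: S) k ltac:(lia).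
  have dXY : [disjoint X & Y].
    apply/pred0P => v /=; apply/negbTE/negP => /andP [vX vY].
    move/subsetP: XS => /(_ _ vX) /imsetP [u uU vE].
    move/subsetP: YS => /(_ _ vY) /imsetP [s sS vE'].
    have /andP [vu _] := gP _ uU; rewrite -vE in vu.
    have vs := hP _ sS; rewrite -vE' in vs.
    have E := disjF D (inMU _ uU) (inM _ sS) vu vs.
    by have /andP [] := I2 _ sS; rewrite -E uU.
  have [x [y [xX yY exy]]] := Hedge X Y dXY cX cY.
  move/subsetP: XS => /(_ _ xX) /imsetP [u uU xE].
  move/subsetP: YS => /(_ _ yY) /imsetP [s sS yE].
  have /andP [_ /forall_inP /(_ _ sS) /forall_inP /(_ y)] := gP _ uU.
  by rewrite -xE exy yE => /(_ (hP _ sS)).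
case: I => I1 I2 I3 [I4 I5 I6].
have cU : #|S :|: U| <= #|S| + #|U| by rewrite cardsU; lia.
case: Q I1 I2 I3 I4 I5 I6 => [|q1 T] I1 I2 I3 I4 I5 I6.
  exists [::]; split; first by left.
  apply: leq_trans (subset_leq_card (_ : M :\: used_pairs [::] \subset S :|: U)) _.
    apply/subsetP => f; rewrite !inE I1 mem_used /= orbF.
    by [].
  lia.
exists (map (@swap V) T); split.
  right; exists q1.1; split.
  - apply/allP => p /mapP [q qT ->]; rewrite pair_swap I1 mem_used.
    apply/orP; right; apply/orP; right; apply/hasP; exists q => //=.
    by rewrite inE qT orbT.
  - move: (path_swap se I4); by case: (map (@swap V) T).
  - rewrite /= (perm_mem (perm_sv_swap T)) (perm_uniq (perm_sv_swap T)).
    move: I5; rewrite seg_cons cat_uniq => /and3P [_ H ->]; rewrite andbT.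
    apply/negP => hq; move/hasP: H; apply; exists q1.1 => //.
    by rewrite mem_seg /pair_set !inE eqxx.
apply: leq_trans (subset_leq_card (_ : M :\: used_pairs (map (@swap V) T) \subset S :|: U :|: [set pair_set q1])) _.
  apply/subsetP => f; rewrite !inE I1 mem_used /= => /andP [nf fM].
  move: fM; rewrite mem_used /=.
  case/or3P => [->|->|] //; first by rewrite orbT.
  case/orP => [/eqP <-|hT]; first by rewrite eqxx orbT.
  case/negP: nf; case/hasP: hT => q qT /eqP <-; apply/hasP; exists (swap q).
    exact: map_f.
  by rewrite pair_swap.
apply: leq_trans (leq_trans (leq_card_setU _ _) (leq_add cU (leqnn _))) _.
rewrite cards1; lia.
Qed.
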